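(* Let $n\ge2$, $p\ge1$, and consider the change-point model $\boldsymbol{X}=\boldsymbol{Z}\boldsymbol{\beta}+\boldsymbol{c}_\tau\phi+\boldsymbol{\Gamma}\boldsymbol{\xi}$ with a possible change at an unknown $\tau\in[n-1]$, where $\boldsymbol{Z}$ is a known $n\times p$ covariate matrix, $\boldsymbol{c}_\tau\in\mathbb{R}^n$ is a known vector of covariates specific to a change at $\tau$, $\boldsymbol{\beta}\in\mathbb{R}^p$ and $\phi\in\mathbb{R}$ are unknown parameters, $\boldsymbol{\Gamma}$ is a known invertible $n\times n$ matrix and $\boldsymbol{\xi}\sim N_n(0,I_n)$. Then there is an $h^*\in\mathcal{H}_{1,2n-2}$ equivalent to the likelihood-ratio test (over unknown $\tau\in[n-1]$) for testing $\phi=0$ against $\phi\neq0$, i.e. $h^*(\boldsymbol{x})=1$ exactly when this likelihood-ratio test rejects.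
   Context: Neural network classes: for $L\ge1$ and widths $\boldsymbol{m}=(m_1,\ldots,m_L)$, set $m_0=n$, $m_{L+1}=1$; for $\boldsymbol{b}\in\mathbb{R}^r$ let $\sigma_{\boldsymbol{b}}(y_1,\ldots,y_r)=(\max(y_1-b_1,0),\ldots,\max(y_r-b_r,0))$. $\mathcal{H}_{L,\boldsymbol{m}}$ is the class of all functions $h:\mathbb{R}^n\to\{0,1\}$ of the form $h(\boldsymbol{x})=\sigma^*_\lambda W_L\sigma_{\boldsymbol{b}_L}\cdots W_1\sigma_{\boldsymbol{b}_1}W_0\boldsymbol{x}$, where $\sigma^*_\lambda(x)=\mathbb{1}\{x>\lambda\}$ with $\lambda>0$, $W_\ell\in\mathbb{R}^{m_{\ell+1}\times m_\ell}$, $\boldsymbol{b}_\ell\in\mathbb{R}^{m_\ell}$. $\mathcal{H}_{1,m}$ denotes the class with one hidden layer of width $m$. *)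

(* Defs.v *)
From HB Require Import structures.
From mathcomp Require Import all_boot all_order all_algebra.
From mathcomp Require Import all_classical all_reals all_analysis.
Set Implicit Arguments. Unset Strict Implicit. Unset Printing Implicit Defensive.
Import Order.TTheory GRing.Theory Num.Theory.
Local Open Scope ring_scope.
Local Open Scope classical_set_scope.

Section Defs.
Variable R : realType.

Definition relu_shift (m : nat) (b y : 'cV[R]_m) : 'cV[R]_m :=
  \col_i Num.max (y i 0 - b i 0) 0.

Definition in_H1 (n m : nat) (h : 'cV[R]_n -> bool) : Prop :=
  exists (W0 : 'M[R]_(m, n)) (b : 'cV[R]_m) (W1 : 'M[R]_(1, m)) (lam : R),
    0 < lam /\ forall x, h x = (lam < (W1 *m relu_shift b (W0 *m x)) 0 0).

Definition sqnorm (n : nat) (v : 'cV[R]_n) : R := \sum_i (v i 0) ^+ 2.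

(* density at x of N_n(mu, Gam Gam^T), i.e. of X = mu + Gam xi, xi ~ N(0, I_n) *)
Definition gauss_dens (n : nat) (Gam : 'M[R]_n) (mu x : 'cV[R]_n) : R :=
  ((Num.sqrt (2 * pi)) ^+ n)^-1 * `|\det Gam|^-1 *
  expR (- (sqnorm (invmx Gam *m (x - mu))) / 2).

(* likelihood-ratio statistic for H0: phi = 0 vs H1: phi <> 0, tau unknown in [n-1]
   (tau = i.+1 for i : 'I_(n-1)) *)
Definition lr_stat (n p : nat) (Z : 'M[R]_(n, p)) (c : 'I_n.-1 -> 'cV[R]_n)
    (Gam : 'M[R]_n) (x : 'cV[R]_n) : R :=
  sup [set y | exists (tau : 'I_n.-1) (beta : 'cV[R]_p) (phi : R),
                 y = gauss_dens Gam (Z *m beta + phi *: c tau) x]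
  / sup [set y | exists beta : 'cV[R]_p, y = gauss_dens Gam (Z *m beta) x].

Definition lr_test_rejects (n p : nat) (Z : 'M[R]_(n, p)) (c : 'I_n.-1 -> 'cV[R]_n)
    (Gam : 'M[R]_n) (k : R) (x : 'cV[R]_n) : Prop :=
  k < lr_stat Z c Gam x.
End Defs.

(* Main.v *)
Require Import Defs.
From HB Require Import structures.
From mathcomp Require Import all_boot all_order all_algebra.
From mathcomp Require Import all_classical all_reals all_analysis.
From mathcomp Require Import ring lra zify.
Set Implicit Arguments. Unset Strict Implicit. Unset Printing Implicit Defensive.
Import Order.TTheory GRing.Theory Num.Theory.
Local Open Scope ring_scope.

Section LA.
Variable R : realType.
Variable n : nat.
Implicit Types (u v w y z : 'cV[R]_n) (Q : 'M[R]_n).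

Definition dot u v : R := (u^T *m v) 0 0.

Lemma dotE u v : dot u v = \sum_i u i 0 * v i 0.
Proof. by rewrite /dot mxE; apply: eq_bigr => i _; rewrite mxE. Qed.

Lemma dotC u v : dot u v = dot v u.
Proof. by rewrite !dotE; apply: eq_bigr => i _; rewrite mulrC. Qed.

Lemma dotDr u v w : dot u (v + w) = dot u v + dot u w.
Proof. by rewrite /dot mulmxDr mxE. Qed.
Lemma dotZr a u v : dot u (a *: v) = a * dot u v.
Proof. by rewrite /dot -scalemxAr mxE. Qed.
Lemma dotNr u v : dot u (- v) = - dot u v.
Proof. by rewrite -scaleN1r dotZr mulN1r. Qed.
Lemma dotBr u v w : dot u (v - w) = dot u v - dot u w.
Proof. by rewrite dotDr dotNr. Qed.
Lemma dotDl u v w : dot (v + w) u = dot v u + dot w u.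
Proof. by rewrite dotC dotDr !(dotC u). Qed.
Lemma dotZl a u v : dot (a *: v) u = a * dot v u.
Proof. by rewrite dotC dotZr dotC. Qed.
Lemma dotBl u v w : dot (v - w) u = dot v u - dot w u.
Proof. by rewrite dotC dotBr !(dotC u). Qed.
Lemma dot0r u : dot u 0 = 0.
Proof. by rewrite dotE big1 // => i _; rewrite mxE mulr0. Qed.
Lemma dot0l u : dot 0 u = 0.
Proof. by rewrite dotC dot0r. Qed.

Lemma dot_ge0 u : 0 <= dot u u.
Proof. by rewrite dotE sumr_ge0 // => i _; rewrite -expr2 sqr_ge0. Qed.

Lemma dot_eq0 u : dot u u = 0 -> u = 0.
Proof.
rewrite dotE => H; apply/matrixP => i j; rewrite (ord1 j) mxE.
have P : forall k : 'I_n, xpredT k -> 0 <= u k 0 * u k 0.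
  by move=> k _; rewrite -expr2 sqr_ge0.
have := @psumr_eq0P _ _ xpredT (fun i => u i 0 * u i 0) P H i isT.
by move=> /eqP; rewrite mulf_eq0 orbb => /eqP.
Qed.

Lemma wwT_mul w z : (w *m w^T) *m z = dot w z *: w.
Proof. by rewrite -mulmxA [w^T *m z]mx11_scalar mul_mx_scalar. Qed.

Definition Subsp (S : 'cV[R]_n -> Prop) :=
  S 0 /\ forall z1 z2 a, S z1 -> S z2 -> S (z1 + a *: z2).

Definition Resid (S : 'cV[R]_n -> Prop) Q :=
  [/\ (forall u v, dot (Q *m u) v = dot u (Q *m v)),
      (forall y, Q *m (Q *m y) = Q *m y),
      (forall z, S z -> Q *m z = 0) &
      (forall y, S (y - Q *m y))].

Lemma resid_min S Q y z : Resid S Q -> S z ->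
  dot (Q *m y) (Q *m y) <= dot (y - z) (y - z).
Proof.
case=> Hs Hi Hz _ Sz.
set u := y - Q *m y - z.
have Qu : Q *m u = 0 by rewrite /u !mulmxBr Hi subrr (Hz _ Sz) subr0.
have -> : y - z = Q *m y + u by rewrite /u addrA [Q *m y + _]addrC subrK.
clearbody u.
rewrite !dotDl !dotDr (Hs y u) Qu dot0r (dotC u (Q *m y)) (Hs y u) Qu dot0r !addr0 add0r.
by rewrite lerDl dot_ge0.
Qed.

Lemma resid_attain S Q y : Resid S Q ->
  exists z, S z /\ dot (y - z) (y - z) = dot (Q *m y) (Q *m y).
Proof.
case=> _ _ _ H; exists (y - Q *m y); split => //.
by rewrite opprB addrC subrK.
Qed.

Lemma resid_ext S S2 Q : (forall z, S z <-> S2 z) -> Resid S Q -> Resid S2 Q.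
Proof.
move=> E [H1 H2 H3 H4]; split => //.
- by move=> z /E; apply: H3.
- by move=> y; apply/E.
Qed.

Definition Sext (S : 'cV[R]_n -> Prop) v z :=
  exists z0 (phi : R), S z0 /\ z = z0 + phi *: v.

Lemma Sext_subsp S v : Subsp S -> Subsp (Sext S v).
Proof.
case=> S0 SD; split; first by exists 0, 0; rewrite scale0r addr0.
move=> z1 z2 a [x1 [p1 [S1 ->]]] [x2 [p2 [S2 ->]]].
exists (x1 + a *: x2), (p1 + a * p2); split; first exact: SD.
by rewrite scalerDr scalerDl scalerA -!addrA; congr (_ + _); rewrite addrCA.
Qed.

Definition Qstep Q v := let w := Q *m v in Q - (dot w w)^-1 *: (w *m w^T).

Lemma Qstep_mul Q v y :
  Qstep Q v *m y = Q *m y - ((dot (Q *m v) (Q *m v))^-1 * dot (Q *m v) y) *: (Q *m v).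
Proof. by rewrite /Qstep mulmxBl -scalemxAl wwT_mul scalerA. Qed.


Lemma resid_step S Q v : Subsp S -> Resid S Q ->
  Resid (Sext S v) (Qstep Q v) /\
  forall y, dot (Qstep Q v *m y) (Qstep Q v *m y) =
    dot (Q *m y) (Q *m y) - (dot (Q *m v) y) ^+ 2 / dot (Q *m v) (Q *m v).
Proof.
move=> [S0 SD] [Hs Hi Hz Hy].
set w := Q *m v.
have F1 : forall y, dot w (Q *m y) = dot w y.
  by move=> y; rewrite /w Hs Hi -Hs.
have Qw : Q *m w = w by rewrite /w Hi.
have QE := Qstep_mul Q v; rewrite -/w in QE.
have [w0|wn0] := eqVneq (dot w w) 0.
  have W0 : w = 0 by apply: dot_eq0.
  have QE' : forall y, Qstep Q v *m y = Q *m y.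
    by move=> y; rewrite QE W0 scaler0 subr0.
  split; last by move=> y; rewrite QE' W0 dot0l expr0n /= mul0r subr0.
  split.
  - by move=> a b; rewrite !QE' Hs.
  - by move=> y; rewrite !QE' Hi.
  - move=> z [z0 [phi [Sz0 ->]]]; rewrite QE' mulmxDr -scalemxAr (Hz _ Sz0).
    by rewrite -/w W0 scaler0 addr0.
  - by move=> y; rewrite QE'; exists (y - Q *m y), 0; rewrite scale0r addr0.
have cw : (dot w w)^-1 * dot w w = 1 by rewrite mulVf.
split; last first.
  move=> y; rewrite QE !dotBl !dotBr !dotZl !dotZr F1 (dotC (Q *m y) w) F1.
  field.
  exact: wn0.
split.
- move=> a b; rewrite !QE dotBl dotBr dotZl dotZr Hs.
  by rewrite (dotC a w); ring.
- move=> y; rewrite QE [Qstep Q v *m _]QE mulmxBr -scalemxAr Qw Hi.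
  rewrite dotBr dotZr (F1 y).
  have -> : (dot w w)^-1 * (dot w y - (dot w w)^-1 * dot w y * dot w w) = 0 by field.
  by rewrite scale0r subr0.
- move=> z [z0 [phi [Sz0 ->]]]; rewrite QE mulmxDr -scalemxAr (Hz _ Sz0) add0r.
  rewrite dotDr dotZr -/w -(F1 v) -/w.
  have -> : dot w z0 = 0 by rewrite /w Hs (Hz _ Sz0) dot0r.
  rewrite add0r mulrCA cw mulr1 subrr //.
- move=> y; rewrite QE opprB addrA.
  set a := (dot w w)^-1 * dot w y.
  exists ((y - Q *m y) + (- a) *: (v - Q *m v)), a; split; first exact: SD.
  rewrite -/w scaleNr scalerBr opprB.
  by rewrite -[in RHS]addrA subrK addrAC.
Qed.
End LA.

Section Span.
Variable R : realType.
Variables n p : nat.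
Variable A : 'M[R]_(n, p).

Definition Sk (k : nat) (z : 'cV[R]_n) :=
  exists beta : 'cV[R]_p, (forall j : 'I_p, (k <= j)%N -> beta j 0 = 0) /\ z = A *m beta.

Lemma Sk_subsp k : Subsp (Sk k).
Proof.
split; first by exists 0; split => [j _|]; rewrite ?mxE ?mulmx0.
move=> z1 z2 a [b1 [H1 ->]] [b2 [H2 ->]]; exists (b1 + a *: b2); split.
  by move=> j hj; rewrite !mxE H1 // H2 // mulr0 addr0.
by rewrite mulmxDr -scalemxAr.
Qed.

Lemma Sk_succ k (hk : (k < p)%N) z :
  Sext (Sk k) (col (Ordinal hk) A) z <-> Sk k.+1 z.
Proof.
split.
  move=> [z0 [phi [[b [Hb ->]] ->]]].
  exists (b + phi *: delta_mx (Ordinal hk) 0); split.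
    move=> j hj; rewrite !mxE Hb; last by apply: ltnW.
    have /negbTE -> : j != Ordinal hk.
      by apply/eqP => E; move: hj; rewrite E /= ltnn.
    by rewrite /= mulr0 addr0.
  by rewrite mulmxDr -scalemxAr colE.
move=> [b [Hb ->]].
exists (A *m (b - b (Ordinal hk) 0 *: delta_mx (Ordinal hk) 0)), (b (Ordinal hk) 0).
split.
  exists (b - b (Ordinal hk) 0 *: delta_mx (Ordinal hk) 0); split => //.
  move=> j hj; rewrite !mxE.
  have [E|nE] := eqVneq j (Ordinal hk).
    by rewrite E eqxx /= mulr1 subrr.
  rewrite /= mulr0 subr0 Hb //.
  rewrite ltn_neqAle hj andbT; apply/eqP => E; move/eqP: nE; apply; apply/val_inj => /=.
  by rewrite E.
by rewrite colE scalemxAr -mulmxDr subrK.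
Qed.

Lemma Sk_resid k : (k <= p)%N -> exists Q, Resid (Sk k) Q.
Proof.
elim: k => [_|k IH hk].
  exists 1%:M; split.
  - by move=> u v; rewrite !mul1mx.
  - by move=> y; rewrite !mul1mx.
  - by move=> z [b [Hb ->]]; rewrite mul1mx (_ : b = 0) ?mulmx0 //; apply/matrixP => i j; rewrite (ord1 j) Hb // mxE.
  - by move=> y; rewrite mul1mx subrr; exists 0; split => [j _|]; rewrite ?mxE ?mulmx0.
have [Q HQ] := IH (ltnW hk).
have [H _] := resid_step (col (Ordinal hk) A) (Sk_subsp k) HQ.
exists (Qstep Q (col (Ordinal hk) A)).
by apply: resid_ext H => z; apply: Sk_succ.
Qed.

Lemma span_resid : exists Q, Resid (fun z => exists beta, z = A *m beta) Q.
Proof.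
have [Q HQ] := Sk_resid (leqnn p); exists Q; apply: resid_ext HQ => z; split.
  by move=> [b [_ ->]]; exists b.
by move=> [b ->]; exists b; split => // j; rewrite leqNgt ltn_ord.
Qed.
End Span.

Section Gad.
Variable R : realType.

Lemma gA (u t : R) : 0 <= t ->
  (2 * t <= Num.max (u - - t) 0 + Num.max (- u - - t) 0) /\
  (2 * t < Num.max (u - - t) 0 + Num.max (- u - - t) 0 <-> t < `|u|).
Proof.
move=> t0; rewrite !maxEle.
have [hu|hu] := lerP 0 u; [rewrite ger0_norm // | rewrite ltr0_norm //];
  case: (lerP (u - - t) 0) => h1; case: (lerP (- u - - t) 0) => h2; split; try lra; split => H; lra.
Qed.

Lemma gB (u : R) :
  (1 <= 2 * Num.max (u - 0) 0 + 1 * Num.max (- u - - 1) 0) /\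
  (1 < 2 * Num.max (u - 0) 0 + 1 * Num.max (- u - - 1) 0 <-> 0 < `|u|).
Proof.
rewrite !maxEle.
have [hu|hu] := lerP 0 u; [rewrite ger0_norm // | rewrite ltr0_norm //];
  case: (lerP (u - 0) 0) => h1; case: (lerP (- u - - 1) 0) => h2; split; try lra; split => H; lra.
Qed.

Lemma sum_lt_iff (I : finType) (F G : I -> R) : (forall i, F i <= G i) ->
  (\sum_i F i < \sum_i G i <-> exists i, F i < G i).
Proof.
move=> FG; split.
  move=> H; apply: contrapT => nE; move: H; apply/negP; rewrite -leNgt.
  apply: ler_sum => i _; rewrite leNgt; apply/negP => Hi; apply: nE; by exists i.
move=> [i Hi]; rewrite (bigD1 i) //= [X in _ < X](bigD1 i) //=.
by apply: ltr_leD => //; apply: ler_sum => j _.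
Qed.
End Gad.

Section Net.
Variable R : realType.
Variable n : nat.

Lemma relu_col m1 m2 (b1 y1 : 'cV[R]_m1) (b2 y2 : 'cV[R]_m2) :
  relu_shift (col_mx b1 b2) (col_mx y1 y2) = col_mx (relu_shift b1 y1) (relu_shift b2 y2).
Proof. by apply/matrixP => i j; rewrite !mxE; by case: (fintype.split i) => k; rewrite !mxE. Qed.

Lemma net_out m (r : 'I_m -> 'rV[R]_n) (b1 b2 c1 c2 : 'I_m -> R) (x : 'cV[R]_n) :
  (row_mx (\row_i c1 i) (\row_i c2 i) *m
    relu_shift (col_mx (\col_i b1 i) (\col_i b2 i))
      (col_mx (\matrix_(i, j) r i 0 j) (\matrix_(i, j) - r i 0 j) *m x)) 0 0 =
  \sum_i (c1 i * Num.max ((r i *m x) 0 0 - b1 i) 0 +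
          c2 i * Num.max (- (r i *m x) 0 0 - b2 i) 0).
Proof.
rewrite mul_col_mx relu_col mxE big_split_ord /= -big_split /=; apply: eq_bigr => i _.
rewrite row_mxEl row_mxEr col_mxEu col_mxEd !mxE.
congr (_ * Num.max (_ - _) _ + _ * Num.max (_ - _) _).
- by apply: eq_bigr => j _; rewrite !mxE.
- by rewrite -sumrN; apply: eq_bigr => j _; rewrite !mxE mulNr.
Qed.

Lemma net_abs m (hm : (0 < m)%N) (r : 'I_m -> 'rV[R]_n) (t : 'I_m -> R) :
  (forall i, 0 <= t i) ->
  exists h : 'cV[R]_n -> bool, in_H1 (m + m) h /\
    forall x, h x <-> exists i, t i < `|(r i *m x) 0 0|.
Proof.
move=> t0.
set W0 := col_mx (\matrix_(i, j) r i 0 j) (\matrix_(i, j) - r i 0 j).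
have [[i0 hi0]|allz] := pselect (exists i, 0 < t i).
  pose b := col_mx (\col_i - t i) (\col_i - t i).
  pose W1 := row_mx (\row_(i < m) (1 : R)) (\row_(i < m) (1 : R)).
  pose lam := \sum_i 2 * t i.
  exists (fun x => lam < (W1 *m relu_shift b (W0 *m x)) 0 0); split.
    exists W0, b, W1, lam; split => //.
    rewrite [X in X < _](_ : _ = \sum_(i < m) (0:R)); last by rewrite big1.
    apply/sum_lt_iff.
      by move=> i; rewrite mulr_ge0.
    by exists i0; rewrite mulr_gt0.
  move=> x; rewrite net_out; under eq_bigr do rewrite !mul1r.
  rewrite sum_lt_iff; last by move=> i; case: (gA ((r i *m x) 0 0) (t0 i)).
  split => [[i /(proj2 (gA _ (t0 i)))] | [i /(proj2 (gA _ (t0 i)))]] H; by exists i.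
have tz : forall i, t i = 0.
  by move=> i; apply/eqP; rewrite eq_le t0 andbT leNgt; apply/negP => H; apply: allz; exists i.
pose b := col_mx (\col_(i < m) (0 : R)) (\col_(i < m) (-1 : R)).
pose W1 := row_mx (\row_(i < m) (2 : R)) (\row_(i < m) (1 : R)).
pose lam := \sum_(i < m) (1 : R).
exists (fun x => lam < (W1 *m relu_shift b (W0 *m x)) 0 0); split.
  exists W0, b, W1, lam; split => //.
  rewrite [X in X < _](_ : _ = \sum_(i < m) (0:R)); last by rewrite big1.
    apply/sum_lt_iff.
    by move=> i.
  by exists (Ordinal hm).
move=> x; rewrite net_out.
rewrite sum_lt_iff; last by move=> i; case: (gB ((r i *m x) 0 0)).
split => [[i /(proj2 (gB _))] | [i]] H; exists i; rewrite ?tz //.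
by apply/(proj2 (gB _)); rewrite -(tz i).
Qed.

Lemma net_true m (hm : (0 < m)%N) : in_H1 (m + m) (fun _ : 'cV[R]_n => true).
Proof.
exists (col_mx (\matrix_(i < m, j < n) (fun _ : 'I_m => (0 : 'rV[R]_n)) i 0 j)
               (\matrix_(i < m, j < n) - (fun _ : 'I_m => (0 : 'rV[R]_n)) i 0 j)).
exists (col_mx (\col_(i < m) (-1 : R)) (\col_(i < m) (0 : R))).
exists (row_mx (\row_(i < m) (1 : R)) (\row_(i < m) (0 : R))).
exists (1 / 2); split => //.
move=> x; rewrite (net_out (fun _ => 0)); apply/esym/idP.
under eq_bigr do rewrite mul0mx mxE mul0r addr0 mul1r.
have -> : Num.max (0 - -1) 0 = 1 :> R by rewrite sub0r opprK maxEle ler10.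
rewrite sumr_const card_ord.
have : (1 <= m%:R :> R) by rewrite ler1n.
rewrite -[_ *+ m]/(m%:R); lra.
Qed.

Lemma thr_iff (T a b : R) : 0 <= T -> 0 <= b -> (b = 0 -> a = 0) ->
  (T < a ^+ 2 / b <-> Num.sqrt (T * b) < `|a|).
Proof.
move=> T0 b0 ba.
have [b00|bn0] := eqVneq b 0.
  rewrite (ba b00) b00 expr0n /= mul0r mulr0 sqrtr0 normr0 !ltxx.
  by split => // H; move: (le_lt_trans T0 H); rewrite ltxx.
have bp : 0 < b by rewrite lt_def bn0 b0.
rewrite ltr_pdivlMr //.
have h1 : Num.sqrt (T * b) \in Num.nneg by rewrite nnegrE sqrtr_ge0.
have h2 : `|a| \in Num.nneg by rewrite nnegrE normr_ge0.
rewrite -(ltr_pXn2r (isT : (0 < 2)%N) h1 h2).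
by rewrite sqr_sqrtr ?mulr_ge0 // real_normK ?num_real.
Qed.
End Net.

Section Main.
Variable R : realType.

Lemma sup_max (E : set R) m : E m -> (forall e, E e -> e <= m) -> sup E = m.
Proof.
move=> Em ub; apply/le_anti/andP; split.
  by apply: ge_sup; [exists m | exact: ub].
by apply: ub_le_sup => //; exists m.
Qed.

Lemma argmax_ex (I : finType) (i0 : I) (F : I -> R) : exists j, forall i, F i <= F j.
Proof.
by case: (@arg_maxP _ _ I i0 xpredT F isT) => j _ H; exists j => i; apply: H.
Qed.

Lemma span_subsp n p (A : 'M[R]_(n, p)) : Subsp (fun z => exists beta, z = A *m beta).
Proof.
split; first by exists 0; rewrite mulmx0.
by move=> z1 z2 a [b1 ->] [b2 ->]; exists (b1 + a *: b2); rewrite mulmxDr scalemxAr.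
Qed.

Lemma sqnorm_dot n (v : 'cV[R]_n) : sqnorm v = dot v v.
Proof. by rewrite /sqnorm dotE; apply: eq_bigr => i _; rewrite expr2. Qed.

Lemma lr_char n p (Z : 'M[R]_(n, p)) (c : 'I_n.-1 -> 'cV[R]_n) (Gam : 'M[R]_n)
  (hGam : Gam \in unitmx) (hn : (0 < n.-1)%N) (Q0 : 'M[R]_n)
  (HQ : Resid (fun z => exists beta, z = (invmx Gam *m Z) *m beta) Q0) (x : 'cV[R]_n) :
  exists j, (forall i, (dot (Q0 *m (invmx Gam *m c i)) (invmx Gam *m x))^+2 /
                        dot (Q0 *m (invmx Gam *m c i)) (Q0 *m (invmx Gam *m c i)) <=
                       (dot (Q0 *m (invmx Gam *m c j)) (invmx Gam *m x))^+2 /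
                        dot (Q0 *m (invmx Gam *m c j)) (Q0 *m (invmx Gam *m c j))) /\
   lr_stat Z c Gam x = expR (((dot (Q0 *m (invmx Gam *m c j)) (invmx Gam *m x))^+2 /
                        dot (Q0 *m (invmx Gam *m c j)) (Q0 *m (invmx Gam *m c j))) / 2).
Proof.
set Gi := invmx Gam; set A := Gi *m Z; set y := Gi *m x.
set s := fun i => (dot (Q0 *m (Gi *m c i)) y)^+2 /
                        dot (Q0 *m (Gi *m c i)) (Q0 *m (Gi *m c i)).
have [j Hj] := argmax_ex (Ordinal hn) s.
exists j; split; first exact: Hj.
set K := ((Num.sqrt (2 * pi)) ^+ n)^-1 * `|\det Gam|^-1.
have Kpos : 0 < K.
  rewrite mulr_gt0 // invr_gt0 ?exprn_gt0 ?sqrtr_gt0 ?mulr_gt0 ?pi_gt0 //.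
  by rewrite normr_gt0 -unitfE -unitmxE.
have dens : forall mu, gauss_dens Gam mu x = K * expR (- dot (y - Gi *m mu) (y - Gi *m mu) / 2).
  by move=> mu; rewrite /gauss_dens sqnorm_dot mulmxBr.
have mono : forall a b, a <= b -> K * expR (- b / 2) <= K * expR (- a / 2).
  by move=> a b ab; rewrite ler_pM2l // ler_expR; lra.
set N0 := dot (Q0 *m y) (Q0 *m y).
have SS := span_subsp A.
rewrite /lr_stat.
rewrite [X in X / _](@sup_max _ (K * expR (- (N0 - s j) / 2))); first last.
- move=> e [i [b [phi ->]]]; rewrite dens.
  have [H1 Hn] := resid_step (Gi *m c i) SS HQ.
  apply: mono; apply: (le_trans (y := N0 - s i)); first by have := Hj i; lra.
  rewrite /N0 /s -Hn mulmxDr -scalemxAr (mulmxA Gi Z b); apply: resid_min H1 _.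

  by exists (A *m b), phi; split => //; exists b.
- have [H1 Hn] := resid_step (Gi *m c j) SS HQ.
  have [z [[z0 [phi [[b ->] ->]]] Hz]] := resid_attain y H1.
  exists j, b, phi; rewrite dens mulmxDr -scalemxAr (mulmxA Gi Z b) -/A Hz Hn.
  by [].
rewrite [X in _ / X](@sup_max _ (K * expR (- N0 / 2))); first last.
- move=> e [b ->]; rewrite dens; apply: mono.
  by rewrite (mulmxA Gi Z b); apply: resid_min HQ _; exists b.
- have [z [[b ->] Hz]] := resid_attain y HQ.
  by exists b; rewrite dens (mulmxA Gi Z b) -/A Hz.
have -> : - (N0 - s j) / 2 = s j / 2 + - N0 / 2 by field.
rewrite expRD mulrCA mulfK //.
by rewrite mulf_neq0 // gt_eqF // expR_gt0.
Qed.
End Main.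

Theorem lemma3p2 (R : realType) (n p : nat) (hn : (2 <= n)%N) (hp : (1 <= p)%N)
    (Z : 'M[R]_(n, p)) (c : 'I_n.-1 -> 'cV[R]_n) (Gam : 'M[R]_n)
    (hGam : Gam \in unitmx) (k : R) :
  exists h : 'cV[R]_n -> bool,
    in_H1 (2 * n - 2)%N h /\
    forall x : 'cV[R]_n, h x <-> lr_test_rejects Z c Gam k x.
Proof.
have hn1 : (0 < n.-1)%N by lia.
have -> : (2 * n - 2 = n.-1 + n.-1)%N by lia.
have [Q0 HQ] := span_resid (invmx Gam *m Z).
have s_ge0 : forall i x, 0 <= (dot (Q0 *m (invmx Gam *m c i)) (invmx Gam *m x))^+2 /
                        dot (Q0 *m (invmx Gam *m c i)) (Q0 *m (invmx Gam *m c i)).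
  by move=> i x; rewrite divr_ge0 ?sqr_ge0 ?dot_ge0.
have [k1|k1] := ltP k 1.
  exists (fun _ => true); split; first exact: net_true.
  move=> x; split => // _; rewrite /lr_test_rejects.
  have [j [Hj ->]] := @lr_char R n p Z c Gam hGam hn1 Q0 HQ x.
  have : 1 <= expR ((dot (Q0 *m (invmx Gam *m c j)) (invmx Gam *m x))^+2 /
                        dot (Q0 *m (invmx Gam *m c j)) (Q0 *m (invmx Gam *m c j)) / 2).
    by rewrite -expR0 ler_expR divr_ge0.
  lra.
set T := 2 * ln k.
have T0 : 0 <= T by rewrite mulr_ge0 // ln_ge0.
pose w i := Q0 *m (invmx Gam *m c i).
have [h [Hh Hx]] := @net_abs R n n.-1 hn1 (fun i => (w i)^T *m invmx Gam)
   (fun i => Num.sqrt (T * dot (w i) (w i))) (fun _ => sqrtr_ge0 _).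
exists h; split => // x; rewrite Hx /lr_test_rejects.
have [j [Hj ->]] := @lr_char R n p Z c Gam hGam hn1 Q0 HQ x.
have kpos : k \in Num.pos by rewrite posrE; lra.
rewrite -{1}(lnK kpos) ltr_expR.
have E : forall i, T < (dot (w i) (invmx Gam *m x))^+2 / dot (w i) (w i) <->
    Num.sqrt (T * dot (w i) (w i)) < `|((w i)^T *m invmx Gam *m x) 0 0|.
  move=> i; rewrite -mulmxA; apply: thr_iff => //; first exact: dot_ge0.
  by move/dot_eq0 => ->; rewrite dot0l.
split.
  move=> [i /E Hi]; have := Hj i; rewrite -/(w i) -/(w j); rewrite /T in Hi; lra.
move=> H; exists j; apply/E; rewrite /T; rewrite -/(w j) in H; lra.
Qed.
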